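(* Let $\tau>0$, let $u_\tau:\mathbb{R}^d\to\mathbb{R}$ be a ($\mathbb{Z}^d$-periodic, continuous) solution of the discrete Lax--Oleinik equation \[ u_\tau(y)+\bar L(\tau)\,\tau=\inf_{x\in\mathbb{R}^d}\bigl(u_\tau(x)+\mathcal L_\tau(x,y)\bigr)\qquad\forall y, \] and let $\{x_n\}_{n\le 0}$ be a calibrated backward configuration for $u_\tau$. Define the discrete velocities $v_n:=\frac{x_{n+1}-x_n}{\tau}$. Then there exists a constant $D>0$, depending only on the Lagrangian $L$, such that $|v_n|\le D$ for all $n\le -1$.
   Context: $\mathbb{T}^d=\mathbb{R}^d/\mathbb{Z}^d$; functions on $\mathbb{T}^d$ are identified with $\mathbb{Z}^d$-periodic functions on $\mathbb{R}^d$. $H:\mathbb{T}^d\times\mathbb{R}^d\to\mathbb{R}$ is a Tonelli Hamiltonian: $H\in C^2$, $D^2_{pp}H(x,p)$ is positive definite for all $(x,p)$, and for every $K>0$ there is $C(K)\in\mathbb{R}$ with $H(x,p)\ge K|p|+C(K)$. $L(x,v)=\sup_{p}\{p\cdot v-H(x,p)\}$ is its Legendre transform (so $L$ is $C^2$, strictly convex in $v$, and superlinear: for every $K>0$ there is $C(K)$ with $L(x,v)\ge K|v|+C(K)$). For $\tau>0$ set $\mathcal L_\tau(x,y):=\tau L\bigl(x,\frac{y-x}{\tau}\bigr)$. It is known that for each $\tau>0$ there is a unique constant $\bar L(\tau)\in\mathbb{R}$ for which the discrete Lax--Oleinik equation above has a continuous periodic solution $u_\tau$, that such solutions are Lipschitz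 with a constant independent of $\tau$, and that $\bar L(\tau)\to-\alpha(H)$ as $\tau\to0$, where $\alpha(H)$ is the unique constant such that $H(x,Du)=\alpha(H)$ has a viscosity solution on $\mathbb{T}^d$. A calibrated (backward) configuration for $u_\tau$ (through $x$) is a sequence $\{x_{-k}\}_{k\ge0}$ with $x_0=x$ and $u_\tau(x_{-k})+\tau\bar L(\tau)=u_\tau(x_{-k-1})+\mathcal L_\tau(x_{-k-1},x_{-k})$ for all $k\ge0$. *)

(* Defs.v *)
From HB Require Import structures.
From mathcomp Require Import all_boot all_order all_algebra.
From mathcomp Require Import all_classical all_reals all_analysis.
Set Implicit Arguments. Unset Strict Implicit. Unset Printing Implicit Defensive.
Import Order.TTheory GRing.Theory Num.Theory.
Import numFieldNormedType.Exports.
Local Open Scope classical_set_scope.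
Local Open Scope ring_scope.

Section Defs.
Variables (R : realType) (d : nat).
Notation V := 'rV[R]_d.

Definition dotR (p v : V) : R := \sum_(i < d) p 0 i * v 0 i.
Definition enorm (v : V) : R := Num.sqrt (dotR v v).

(* Z^d-periodicity in the space variable (functions on T^d). *)
Definition Zperiodic (u : V -> R) : Prop :=
  forall (x : V) (k : 'rV[int]_d), u (x + map_mx (fun z : int => z%:~R) k) = u x.

Definition C2 (f : V * V -> R) : Prop :=
  continuous f /\
  (forall (v : V * V) z, derivable f z v) /\
  (forall v : V * V, continuous ('D_v f)) /\
  (forall (v w : V * V) z, derivable ('D_v f) z w) /\
  (forall v w : V * V, continuous ('D_w ('D_v f))).

Definition uncurryH (H : V -> V -> R) : V * V -> R := fun z => H z.1 z.2.

Definition evec (i : 'I_d) : V := \row_(j < d) (i == j)%:R.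

Definition Hess_pp (H : V -> V -> R) (x p : V) : 'M[R]_d :=
  \matrix_(i < d, j < d)
    ('D_((0 : V), evec j) ('D_((0 : V), evec i) (uncurryH H))) (x, p).

Definition posdef (M : 'M[R]_d) : Prop :=
  forall w : V, w != 0 -> 0 < (w *m M *m w^T) 0 0.

Definition tonelli (H : V -> V -> R) : Prop :=
  [/\ (forall x p (k : 'rV[int]_d),
         H (x + map_mx (fun z : int => z%:~R) k) p = H x p),
      C2 (uncurryH H),
      (forall x p, posdef (Hess_pp H x p)) &
      (forall K : R, 0 < K -> exists C : R, forall x p, K * enorm p + C <= H x p)].

Definition lagrangian (H : V -> V -> R) (x v : V) : R :=
  sup [set dotR p v - H x p | p in [set: V]].

Definition Ltau (H : V -> V -> R) (tau : R) (x y : V) : R :=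
  tau * lagrangian H x (tau^-1 *: (y - x)).

Definition discrete_LO (H : V -> V -> R) (tau c : R) (u : V -> R) : Prop :=
  forall y : V, u y + c * tau = inf [set u x + Ltau H tau x y | x in [set: V]].

(* Calibrated backward configuration: X k stands for x_{-k}. *)
Definition calibrated (H : V -> V -> R) (tau c : R) (u : V -> R) (X : nat -> V) : Prop :=
  forall k : nat, u (X k) + tau * c = u (X k.+1) + Ltau H tau (X k.+1) (X k).

End Defs.

(* Main.v *)
Require Import Defs.
From HB Require Import structures.
From mathcomp Require Import all_boot all_order all_algebra.
From mathcomp Require Import all_classical all_reals all_analysis.
From mathcomp Require Import lra ring.
Import Order.TTheory GRing.Theory Num.Theory.
Import numFieldNormedType.Exports.
Local Open Scope classical_set_scope.
Local Open Scope ring_scope.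
Lemma dotR_ge0 {R : realType} {d : nat} (v : 'rV[R]_d) : 0 <= dotR v v.
Proof. by apply: sumr_ge0 => i _; rewrite -expr2 sqr_ge0. Qed.

Lemma enorm_ge0 {R : realType} {d : nat} (v : 'rV[R]_d) : 0 <= enorm v.
Proof. exact: sqrtr_ge0. Qed.

Lemma enorm_sq {R : realType} {d : nat} (v : 'rV[R]_d) : enorm v ^+ 2 = dotR v v.
Proof. by rewrite /enorm sqr_sqrtr // dotR_ge0. Qed.

Lemma dotRZl {R : realType} {d : nat} (a : R) (v w : 'rV[R]_d) :
  dotR (a *: v) w = a * dotR v w.
Proof. by rewrite /dotR mulr_sumr; apply: eq_bigr => i _; rewrite mxE mulrA. Qed.

Lemma dotRC {R : realType} {d : nat} (v w : 'rV[R]_d) : dotR v w = dotR w v.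
Proof. by apply: eq_bigr => i _; rewrite mulrC. Qed.

Lemma enormZ {R : realType} {d : nat} (a : R) (v : 'rV[R]_d) :
  enorm (a *: v) = `|a| * enorm v.
Proof.
rewrite /enorm dotRZl dotRC dotRZl mulrA -expr2 sqrtrM ?sqr_ge0 //.
by rewrite sqrtr_sqr.
Qed.

Lemma entry_le_enorm {R : realType} {d : nat} (v : 'rV[R]_d) i : `|v ord0 i| <= enorm v.
Proof.
rewrite -(ler_sqr (x:=`|v ord0 i|)) ?nnegrE ?normr_ge0 ?enorm_ge0 //.
rewrite enorm_sq /dotR (bigD1 i) //= real_normK ?num_real // expr2.
rewrite lerDl; apply: sumr_ge0 => j _; rewrite -expr2 sqr_ge0 //.
Qed.

Lemma enorm0_eq {R : realType} {d : nat} (v : 'rV[R]_d) : enorm v = 0 -> v = 0.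
Proof.
move=> h; have h2 : dotR v v = 0 by rewrite -enorm_sq h expr0n.
apply/rowP => i; rewrite mxE.
have hp : forall j, xpredT j -> 0 <= v 0 j * v 0 j by move=> j _; rewrite -expr2 sqr_ge0.
have := psumr_eq0P hp h2 (isT : xpredT i).
by move/eqP; rewrite mulf_eq0 orbb => /eqP.
Qed.

Lemma CS {R : realType} {d : nat} (p v : 'rV[R]_d) : dotR p v <= enorm p * enorm v.
Proof.
have [hp|hp] := eqVneq (enorm p) 0.
  rewrite (enorm0_eq _ hp) /dotR big1; first exact: mulr_ge0 (enorm_ge0 _) (enorm_ge0 _).
  by move=> i _; rewrite mxE mul0r.
have [hv|hv] := eqVneq (enorm v) 0.
  rewrite (enorm0_eq _ hv) /dotR big1; first exact: mulr_ge0 (enorm_ge0 _) (enorm_ge0 _).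
  by move=> i _; rewrite mxE mulr0.
have pp : 0 < enorm p by rewrite lt0r hp enorm_ge0.
have pv : 0 < enorm v by rewrite lt0r hv enorm_ge0.
set s := enorm v / enorm p.
have s0 : 0 < s by rewrite divr_gt0.
have key : forall a b : R, 2 * (s * (a * b)) <= s ^+ 2 * (a * a) + b * b.
  move=> a b; have := sqr_ge0 (s * a - b); nra.
have : 2 * (s * dotR p v) <= s ^+ 2 * dotR p p + dotR v v.
  rewrite /dotR mulr_sumr mulr_sumr mulr_sumr -big_split /=.
  by apply: ler_sum => i _; apply: key.
rewrite -!enorm_sq /s => h.
have e : (enorm v / enorm p) ^+ 2 * enorm p ^+ 2 + enorm v ^+ 2 = 2 * (enorm v / enorm p) * (enorm p * enorm v).
  by field; rewrite hp.
rewrite e mulrA in h.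
by rewrite -(ler_pM2l (_ : 0 < 2 * (enorm v / enorm p))) // mulr_gt0 // divr_gt0.
Qed.
Lemma cont_bound (R : realType) (T : topologicalType) (f : T -> R) (A : set T) :
  continuous f -> compact A -> exists M : R, forall x, A x -> `|f x| <= M.
Proof.
move=> fc Ac.
have cA := continuous_compact (continuous_subspaceT fc) Ac.
have [M [_ HM]] := compact_bounded cA.
exists (M + 1) => x Ax.
have := HM (M + 1) (ltr_pwDr ltr01 (lexx M)) _ (ex_intro2 _ _ x Ax erefl).
by [].
Qed.
Lemma cube_compact (R : realType) (d : nat) (a b : R) :
  compact [set v : 'rV[R]_d | forall i, v ord0 i \in `[a, b]].
Proof.
apply: (@rV_compact _  _ (fun=> `[a, b]%classic)).
by move=> _; apply: segment_compact.
Qed.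

Lemma frac_shift {R : realType} {d : nat} (x : 'rV[R]_d) :
  exists k : 'rV[int]_d,
    forall i, (x + map_mx (fun z : int => z%:~R) k) ord0 i \in `[0, 1].
Proof.
exists (\row_i (- Num.floor (x ord0 i))) => i.
rewrite !mxE in_itv /= rmorphN /=.
apply/andP; split; first by rewrite subr_ge0 floor_le.
have := floorD1_gt (x ord0 i); rewrite rmorphD /= => h.
by rewrite lerBlDl ltW // addrC.
Qed.

Lemma u_bounded {R : realType} {d : nat} (u : 'rV[R]_d -> R) :
  continuous u -> Zperiodic u -> exists B, forall x, `|u x| <= B.
Proof.
move=> uc up.
have [B hB] := @cont_bound _ _ _ _ uc (cube_compact _ d 0 1).
exists B => x; have [k hk] := frac_shift x.
by rewrite -(up x k); apply: hB.
Qed.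

Lemma H_bounded {R : realType} {d : nat} (H : 'rV[R]_d -> 'rV[R]_d -> R) :
  tonelli H -> forall K : R, exists M, forall x p, enorm p <= K -> H x p <= M.
Proof.
case=> Hper [Hc _] _ _ K.
have [M hM] := @cont_bound _ _ _ _ Hc (compact_setX (cube_compact _ d 0 1) (cube_compact _ d (- K) K)).
exists M => x p hp; have [k hk] := frac_shift x.
rewrite -(Hper x p k).
apply: le_trans (ler_norm _) _.
apply: (hM (x + map_mx (fun z : int => z%:~R) k, p)); split => //= i.
rewrite in_itv /= -ler_norml; exact: le_trans (entry_le_enorm _ _) hp.
Qed.

Lemma lag_elem_le {R : realType} {d : nat} (H : 'rV[R]_d -> 'rV[R]_d -> R) (K C : R) :
  (forall x p, K * enorm p + C <= H x p) ->
  forall x v, enorm v <= K -> forall p, dotR p v - H x p <= - C.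
Proof.
move=> hC x v hv p.
have h1 := CS p v.
have h2 : enorm p * enorm v <= enorm p * K by rewrite ler_wpM2l ?enorm_ge0.
have := hC x p; lra.
Qed.

Lemma lag_le {R : realType} {d : nat} (H : 'rV[R]_d -> 'rV[R]_d -> R) (K C : R) :
  (forall x p, K * enorm p + C <= H x p) ->
  forall x v, enorm v <= K -> lagrangian H x v <= - C.
Proof.
move=> hC x v hv; apply: ge_sup; first by exists (dotR 0 v - H x 0), 0.
by move=> _ [p _ <-]; apply: lag_elem_le hv p.
Qed.

Lemma lag_ge_elem {R : realType} {d : nat} (H : 'rV[R]_d -> 'rV[R]_d -> R) :
  tonelli H -> forall x v p, dotR p v - H x p <= lagrangian H x v.
Proof.
case=> _ _ _ hsl x v p.
have [C hC] := hsl (enorm v + 1) (ltr_pwDr ltr01 (enorm_ge0 v)).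
apply: sup_upper_bound; last by exists p.
split; first by exists (dotR p v - H x p), p.
exists (- C) => _ [q _ <-]; have := @lag_elem_le R d H _ _ hC x v; apply.
by rewrite lerDl.
Qed.

Lemma lag_lb {R : realType} {d : nat} (H : 'rV[R]_d -> 'rV[R]_d -> R) :
  tonelli H -> forall K : R, 0 < K -> exists M,
    forall x v, K * enorm v - M <= lagrangian H x v.
Proof.
move=> tH K K0; have [M hM] := H_bounded _ tH K.
exists M => x v.
have [hv|hv] := eqVneq (enorm v) 0.
  rewrite hv mulr0 sub0r; apply: le_trans (lag_ge_elem _ tH x v 0).
  by rewrite /dotR big1 ?sub0r ?lerN2 ?hM ?enorm0 // => [|i _]; [rewrite /enorm /dotR big1 ?sqrtr0 ?ltW // => i _; rewrite mxE mul0r | rewrite mxE mul0r].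
have pv : 0 < enorm v by rewrite lt0r hv enorm_ge0.
set p := (K / enorm v) *: v.
have np : enorm p = K by rewrite /p enormZ ger0_norm ?divr_ge0 ?ltW // divfK.
apply: le_trans (lag_ge_elem _ tH x v p).
rewrite /p dotRZl -enorm_sq.
have -> : K / enorm v * enorm v ^+ 2 = K * enorm v by rewrite expr2 mulrA divfK.
by rewrite lerB // hM // np.
Qed.

Theorem lemma3p4 (R : realType) (d : nat) (H : 'rV[R]_d -> 'rV[R]_d -> R) :
  tonelli H ->
  exists D : R, 0 < D /\
    forall (tau c : R) (u : 'rV[R]_d -> R) (X : nat -> 'rV[R]_d),
      0 < tau ->
      continuous u -> Zperiodic u ->
      discrete_LO H tau c u ->
      calibrated H tau c u X ->
      forall k : nat, enorm (tau^-1 *: (X k - X k.+1)) <= D.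
Proof.
move=> tH.
have tH' := tH; case: tH' => _ _ _ hsl.
have [C2 hC2] := hsl 2 (ltr0Sn R 1).
have Lub : forall x v, enorm v <= 2 -> lagrangian H x v <= - C2.
  by move=> x v hv; exact: (lag_le _ _ _ hC2 x v hv).
have [M1 hM1] := lag_lb _ tH 1 ltr01.
have K3p : 0 < `|M1 - C2| + 1 by rewrite ltr_pwDr ?normr_ge0.
have [M3 hM3] := lag_lb _ tH _ K3p.
exists (`|M3 - C2| + 1); split; first by rewrite ltr_pwDr ?normr_ge0.
move=> tau c u X tau0 uc up hLO hcal k.
have [B hB] := u_bounded _ uc up.
have Lge : forall x v, - M1 <= lagrangian H x v.
  move=> x v; apply: le_trans (hM1 x v); have := enorm_ge0 v; lra.
have LOi : forall x y, u y + c * tau <= u x + Ltau H tau x y.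
  move=> x y; rewrite (hLO y).
  have hlb : has_lbound [set u x0 + Ltau H tau x0 y | x0 in [set: 'rV[R]_d]].
    exists (- B + tau * - M1) => _ [z _ <-]; apply: lerD.
      by have := hB z; rewrite ler_norml => /andP[].
    by rewrite /Ltau; apply: ler_wpM2l; [exact: ltW | exact: Lge].
  by apply: (ge_inf hlb); exists x.
have cub : c <= - C2.
  have := LOi 0 0; rewrite /Ltau subrr scaler0 => h.
  have h2 : lagrangian H 0 0 <= - C2 by apply: Lub; rewrite /enorm /dotR big1 ?sqrtr0 // => i _; rewrite mxE mul0r.
  have h3 : tau * lagrangian H 0 0 <= tau * - C2 by apply: ler_wpM2l => //; exact: ltW.
  rewrite -(ler_pM2r tau0); nra.
have clb : - M1 <= c.
  set U := [set u x | x in [set: 'rV[R]_d]].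
  have hU : has_inf U.
    split; first by exists (u 0), 0.
    by exists (- B) => _ [z _ <-]; have := hB z; rewrite ler_norml => /andP[].
  have Ulb : forall x, inf U <= u x by move=> x; apply: (ge_inf hU.2); exists x.
  apply/ler_addgt0Pr => e e0.
  have [_ [y _ <-] hy] := inf_adherent (mulr_gt0 e0 tau0) hU.
  have : inf U - tau * M1 <= u y + c * tau.
    rewrite (hLO y); apply: lb_le_inf; first by exists (u y + Ltau H tau y y), y.
    move=> _ [z _ <-]; apply: lerD => //; rewrite /Ltau -mulrN; apply: ler_wpM2l; [exact: ltW | exact: Lge].
  move=> h.
  have : - M1 * tau <= (c + e) * tau by nra.
  by rewrite ler_pM2r.
have chain : forall (w x : 'rV[R]_d), enorm w <= 2 -> forall j : nat,
    u (x + (j%:R * tau) *: w) <= u x + j%:R * tau * (- C2 - c).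
  move=> w x hw; elim=> [|j IH]; first by rewrite mul0r scale0r addr0 !mul0r addr0.
  set y := x + (j%:R * tau) *: w.
  have ey : x + (j.+1%:R * tau) *: w = y + tau *: w.
    by rewrite /y -addrA -scalerDl mulrSr mulrDl mul1r.
  have := LOi y (y + tau *: w); rewrite /Ltau.
  have -> : tau^-1 *: (y + tau *: w - y) = w.
    by rewrite [y + _]addrC addrK scalerA mulVf ?gt_eqF // scale1r.
  have := Lub y w hw => h1 h2.
  have h3 : tau * lagrangian H y w <= tau * - C2 by apply: ler_wpM2l => //; exact: ltW.
  rewrite ey mulrSr !mulrDl mul1r; move: IH h2 h3; set A := u y; set B1 := u (y + tau *: w); set Lw := lagrangian H y w; set jt := j%:R * tau; move=> IH h2 h3; nra.
set v := tau^-1 *: (X k - X k.+1).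
have [tl tu] := andP (truncn_itv (divr_ge0 (enorm_ge0 v) (ler0n R 2))).
set N := (Num.truncn (enorm v / 2)).+1.
have N0 : 0 < N%:R :> R by exact: ltr0Sn.
set w := (N%:R)^-1 *: v.
have hw : enorm w <= 2.
  rewrite /w enormZ ger0_norm; last by rewrite invr_ge0 ltW.
  rewrite mulrC ler_pdivrMr //; move: tu; rewrite -/N; lra.
have := chain w (X k.+1) hw N.
have -> : X k.+1 + (N%:R * tau) *: w = X k.
  rewrite /w scalerA mulrAC mulfV ?gt_eqF // mul1r /v scalerA mulfV ?gt_eqF // scale1r.
  by rewrite addrC subrK.
have := hcal k; rewrite /Ltau -/v => hc hch.
have hL : tau * lagrangian H (X k.+1) v <= tau * (N%:R * (- C2 - c) + c) by nra.
rewrite ler_pM2l // in hL.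
have := hM3 (X k.+1) v => h3.
have nv := enorm_ge0 v.
have hN : N%:R <= enorm v / 2 + 1 by rewrite /N -addn1 natrD; lra.
have ha : 0 <= - C2 - c by lra.
have hNa : N%:R * (- C2 - c) <= (enorm v / 2 + 1) * (- C2 - c) by rewrite ler_wpM2r.
have hab : (- C2 - c) <= `|M1 - C2| by apply: le_trans (ler_norm _); lra.
have hva : enorm v / 2 * (- C2 - c) <= enorm v * `|M1 - C2|.
  apply: le_trans (_ : enorm v * (- C2 - c) <= _); first by rewrite ler_wpM2r //; lra.
  by rewrite ler_wpM2l.
have := ler_norm (M3 - C2).
nra.
Qed.
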